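(* Let $X,Y,Z$ be complex Banach spaces, $\emptyset\ne I\subseteq\mathbb R^n$, let $\mathcal B$ be a non-empty collection of non-empty subsets of $X$ such that every $x\in X$ belongs to some $B\in\mathcal B$, and let $\mathrm R$ be a non-empty collection of sequences in $\mathbb R^n$ such that $\mathbf t+\mathbf b(l)\in I$ whenever $\mathbf t\in I$, $\mathbf b\in\mathrm R$, $l\in\mathbb N$. Suppose $F:I\times X\to Y$ is $(\mathrm R,\mathcal B)$-multi-almost periodic and $G:I\times Y\to Z$ is $(\mathrm R',\mathcal B')$-multi-almost periodic, where $\mathrm R'$ consists of all sequences from $\mathrm R$ together with all their subsequences and $\mathcal B':=\{\bigcup_{\mathbf t\in I}F(\mathbf t;B):B\in\mathcal B\}$. If there exists $L>0$ with $\|G(\mathbf t;x)-G(\mathbf t;y)\|_Z\le L\|x-y\|_Y$ for all $\mathbf t\in I$, $x,y\in Y$, then $W(\mathbf t;x):=G(\mathbf t;F(\mathbf t;x))$, $\mathbf t\in I$, $x\in X$, is $(\mathrm R,\mathcal B)$-multi-almost periodic.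
   Context: For Banach spaces $U,V$, a collection $\mathcal C$ of subsets of $U$ and a collection $\mathrm S$ of sequences in $\mathbb R^n$ with $\mathbf t+\mathbf b(l)\in I$ for $\mathbf t\in I$, $\mathbf b\in\mathrm S$, a continuous $H:I\times U\to V$ is $(\mathrm S,\mathcal C)$-multi-almost periodic if for every $C\in\mathcal C$ and every $(\mathbf b_k)\in\mathrm S$ there exist a subsequence $(\mathbf b_{k_l})$ and $H^\ast:I\times U\to V$ with $H(\mathbf t+\mathbf b_{k_l};u)\to H^\ast(\mathbf t;u)$ uniformly for $u\in C$, $\mathbf t\in I$. *)

(* Defs.v *)
From mathcomp Require Import all_boot all_order all_algebra.
From mathcomp Require Import all_classical all_reals all_analysis.
From mathcomp Require Import complex.
Import Order.TTheory GRing.Theory Num.Theory.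
Import numFieldNormedType.Exports.
Local Open Scope ring_scope.
Local Open Scope classical_set_scope.

Set Implicit Arguments.
Unset Strict Implicit.
Unset Printing Implicit Defensive.

Definition strict_incr (k : nat -> nat) : Prop :=
  forall i j : nat, (i < j)%N -> (k i < k j)%N.

(* H is given as a total function 'rV_n -> U -> V; only its values on I x U
   matter. *)
Definition multi_almost_periodic (R : realType) (n : nat)
  (U V : completeNormedModType R[i]) (I : set 'rV[R]_n)
  (S : set (nat -> 'rV[R]_n)) (C : set (set U)) (H : 'rV[R]_n -> U -> V) : Prop :=
  {within [set p : 'rV[R]_n * U | I p.1], continuous (fun p => H p.1 p.2)} /\
  forall D, C D -> forall b, S b ->
    exists k : nat -> nat, strict_incr k /\
    exists Hs : 'rV[R]_n -> U -> V,
      forall eps : R, 0 < eps -> exists N : nat, forall l : nat, (N <= l)%N ->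
        forall t u, I t -> D u -> `|H (t + b (k l)) u - Hs t u| < (eps%:C)%C.

Definition with_subsequences (R : realType) (n : nat) (S : set (nat -> 'rV[R]_n))
  : set (nat -> 'rV[R]_n) :=
  [set b' | exists b, S b /\ exists k, strict_incr k /\ b' = (fun l => b (k l))].

Definition image_collection (R : realType) (n : nat) (X Y : Type)
  (I : set 'rV[R]_n) (F : 'rV[R]_n -> X -> Y) (B : set (set X)) : set (set Y) :=
  [set D | exists A, B A /\ D = [set y | exists t, I t /\ exists x, A x /\ y = F t x]].

(* Main.v *)
Require Import Defs.
From mathcomp Require Import all_boot all_order all_algebra.
From mathcomp Require Import all_classical all_reals all_analysis.
From mathcomp Require Import complex.
From mathcomp Require Import zify ring.
Import Order.TTheory GRing.Theory Num.Theory.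
Import numFieldNormedType.Exports.
Local Open Scope ring_scope.
Local Open Scope classical_set_scope.

Lemma near_oo (P : nat -> Prop) : (\forall m \near \oo, P m) -> exists M, forall m, (M <= m)%N -> P m.
Proof. by case=> M _ H; exists M => m hm; apply: H. Qed.

Lemma oo_near (P : nat -> Prop) M : (forall m, (M <= m)%N -> P m) -> \forall m \near \oo, P m.
Proof. by move=> H; exists M. Qed.

Lemma gt0_real (R : realType) (e : R[i]) : 0 < e -> e = (complex.Re e)%:C%C /\ 0 < complex.Re e.
Proof.
case: e => a b; rewrite ltcE /= => /andP[/eqP b0 ha]; subst b; split => //.
Qed.

Lemma strict_incr_ge k : strict_incr k -> forall l, (l <= k l)%N.
Proof.
move=> hk; elim=> [|l IH] //; have := hk l l.+1 (ltnSn l); lia.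
Qed.

Lemma cont_comp (R : realType) (n : nat)
  (X Y Z : completeNormedModType R[i])
  (I : set 'rV[R]_n) (F : 'rV[R]_n -> X -> Y) (G : 'rV[R]_n -> Y -> Z) :
  {within [set p : 'rV[R]_n * X | I p.1], continuous (fun p => F p.1 p.2)} ->
  {within [set p : 'rV[R]_n * Y | I p.1], continuous (fun p => G p.1 p.2)} ->
  {within [set p : 'rV[R]_n * X | I p.1], continuous (fun p => G p.1 (F p.1 p.2))}.
Proof.
move=> /subspace_continuousP cF /subspace_continuousP cG.
apply/subspace_continuousP => p Ap.
pose h := fun r : 'rV[R]_n * X => (r.1, F r.1 r.2).
have hq : [set p : 'rV[R]_n * Y | I p.1] (h p) := Ap.
have h1 : h @ within [set p : 'rV[R]_n * X | I p.1] (nbhs p) --> h p.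
  have c1 : (fun r : 'rV[R]_n * X => r.1) @ within [set p : 'rV[R]_n * X | I p.1] (nbhs p) --> p.1.
    by apply: cvg_within_filter; exact: cvg_fst.
  have := @cvg_pair _ _ _ (within [set p : 'rV[R]_n * X | I p.1] (nbhs p)) (nbhs p.1) (nbhs (F p.1 p.2)) _ _ _ _ _ c1 (cF p Ap).
  move=> H; exact: H.
have h2 : h @ within [set p : 'rV[R]_n * X | I p.1] (nbhs p) --> within [set p : 'rV[R]_n * Y | I p.1] (nbhs (h p)).
  move=> S hS; have := h1 _ hS.
  rewrite /= !nbhs_simpl /within /=.
  apply: (@filterS _ (nbhs p)) => r H Ar0.
  exact: (H Ar0 Ar0).
apply: (@cvg_comp _ _ _ h (fun q : 'rV[R]_n * Y => G q.1 q.2) (within [set p : 'rV[R]_n * X | I p.1] (nbhs p)) (within [set p : 'rV[R]_n * Y | I p.1] (nbhs (h p)))).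
  exact: h2.
exact: (cG _ hq).
Qed.

Lemma to_real_eps (R : realType) (P : R[i] -> Prop) :
  (forall eps : R, 0 < eps -> P (eps%:C)%C) -> forall e : R[i], 0 < e -> P e.
Proof. by move=> H e /gt0_real [-> h]; apply: H. Qed.

Theorem theorem2p45 (R : realType) (n : nat)
  (X Y Z : completeNormedModType R[i])
  (I : set 'rV[R]_n) (B : set (set X)) (RR : set (nat -> 'rV[R]_n))
  (F : 'rV[R]_n -> X -> Y) (G : 'rV[R]_n -> Y -> Z) :
  I !=set0 ->
  B !=set0 ->
  (forall A, B A -> A !=set0) ->
  (forall x : X, exists A, B A /\ A x) ->
  RR !=set0 ->
  (forall t b l, I t -> RR b -> I (t + b l)) ->
  multi_almost_periodic I RR B F ->
  multi_almost_periodic I (with_subsequences RR) (image_collection I F B) G ->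
  (exists L : R, 0 < L /\
     forall t (x y : Y), I t -> `|G t x - G t y| <= (L%:C)%C * `|x - y|) ->
  multi_almost_periodic I RR B (fun t x => G t (F t x)).
Proof.
move=> _ _ _ _ _ hI [cF hF] [cG hG] [L [L0 hL]].
split; first exact: (@cont_comp R n X Y Z I F G cF cG).
move=> D BD b Rb.
have [k1 [k1i [Fs hF1]]] := hF D BD b Rb.
pose D' := [set y | exists t, I t /\ exists x, D x /\ y = F t x].
have BD' : image_collection I F B D' by exists D.
have Rb' : with_subsequences RR (fun l => b (k1 l)).
  by exists b; split => //; exists k1.
have [k2 [k2i [Gs hG1]]] := hG D' BD' _ Rb'.
pose c := fun l => b (k1 (k2 l)).
pose W := fun t x => G t (F t x).
have Ic : forall t l, I t -> I (t + c l) by move=> t l It; exact: (hI t b (k1 (k2 l)) It Rb).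
have hF2 : forall e : R[i], 0 < e -> exists N, forall l, (N <= l)%N ->
    forall t u, I t -> D u -> `|F (t + b (k1 l)) u - Fs t u| < e.
  by move=> e /gt0_real [-> ?]; exact: hF1.
have hG2 : forall e : R[i], 0 < e -> exists N, forall l, (N <= l)%N ->
    forall t u, I t -> D' u -> `|G (t + c l) u - Gs t u| < e.
  by move=> e /gt0_real [-> ?]; exact: hG1.
have Hc : forall e : R[i], 0 < e -> exists N, forall l m, (N <= l)%N -> (N <= m)%N ->
    forall t x, I t -> D x -> `|W (t + c l) x - W (t + c m) x| < e.
  move=> e e0.
  pose d := e / (2 * (L%:C%C + 1)).
  have L0' : 0 <= L%:C%C :> R[i] by rewrite lecE /= eqxx /= ltW.
  have d0 : 0 < d.
    rewrite /d divr_gt0 // mulr_gt0 // ltr_pwDr //.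
  have [N1 HN1] := hF2 d d0.
  have [N2 HN2] := hG2 d d0.
  exists (maxn N1 N2) => l m hl hm t x It Dx.
  have hFl : forall j, (maxn N1 N2 <= j)%N -> `|F (t + c j) x - Fs t x| < d.
    move=> j hj; apply: HN1 => //.
    have := strict_incr_ge k2 k2i j; lia.
  have hGl : forall j y, (maxn N1 N2 <= j)%N -> D' y -> `|G (t + c j) y - Gs t y| < d.
    move=> j y hj Dy; apply: (HN2 j) => //; lia.
  set y := F (t + c m) x.
  have Dy : D' y by exists (t + c m); split; [exact: Ic | exists x].
  have e1 : `|W (t + c l) x - W (t + c m) x| <=
            `|G (t + c l) (F (t + c l) x) - G (t + c l) y| + `|G (t + c l) y - G (t + c m) y|.
    exact: ler_distD.
  have e2 : `|G (t + c l) (F (t + c l) x) - G (t + c l) y| <= L%:C%C * (d + d).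
    apply: le_trans (hL _ _ _ (Ic t l It)) _.
    apply: ler_wpM2l => //.
    apply: le_trans (ler_distD (Fs t x) _ _) _.
    by apply: lerD; apply: ltW; [|rewrite distrC]; apply: hFl.
  have e3 : `|G (t + c l) y - G (t + c m) y| < d + d.
    apply: le_lt_trans (ler_distD (Gs t y) _ _) _.
    by apply: ltrD; [|rewrite distrC]; apply: hGl.
  have -> : e = L%:C%C * (d + d) + (d + d).
    rewrite /d; field.
    by rewrite gt_eqF // ltr_pwDr.
  apply: le_lt_trans e1 _.
  exact: ler_ltD e2 e3.
pose u := fun t x l => W (t + c l) x.
have cvu : forall t x, I t -> D x -> cvg (u t x @ \oo).
  move=> t x It Dx; apply/cauchy_cvgP/cauchy_exP => e e0.
  have [N HN] := Hc e e0.
  exists (u t x N); exists N => // l hl /=.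
  rewrite -ball_normE /ball_ /=; exact: HN.
exists (fun l => k1 (k2 l)); split.
  by move=> i j ij; apply: k1i; apply: k2i.
exists (fun t x => lim (u t x @ \oo)).
move=> eps eps0.
have e0 : 0 < (eps%:C / 2)%C :> R[i].
  by rewrite divr_gt0 // ltcE /= eqxx.
have [N HN] := Hc _ e0.
exists N => l hl t x It Dx.
have := cvu t x It Dx => /cvgr_dist_lt /(_ _ e0) /near_oo [M HM].
have hm := HM (maxn N M) (leq_maxr _ _).
have hl2 := HN l (maxn N M) hl (leq_maxl _ _) t x It Dx.
apply: le_lt_trans (ler_distD (u t x (maxn N M)) _ _) _.
rewrite (splitr (eps%:C)%C); apply: ltrD => //.
by rewrite distrC; exact: hm.
Qed.
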